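(* Let $\Theta$ be a variety of algebras and let $H\in\Theta$ be a finitely generated algebra that contains no proper subalgebra isomorphic to $H$. Then every algebra $G\in\Theta$ isotyped to $H$ is isomorphic to $H$.
   Context: $X^0=\{x_1,x_2,\dots\}$ is an infinite set of variables; for finite $X\subset X^0$, $W(X)$ is the free $\Theta$-algebra on $X$; homomorphisms $W(X)\to H$ are points. For each finite $X$, the set $\Phi(X)$ of formulas of sort $X$ is defined inductively: equalities $w\equiv w'$ ($w,w'\in W(X)$) are in $\Phi(X)$; $\Phi(X)$ is closed under $\neg,\vee,\wedge$ and $\exists x$ for $x\in X$; and for each homomorphism $s:W(X)\to W(Y)$ and $u\in\Phi(X)$, $s_*u\in\Phi(Y)$. Values $Val^X_H(u)\subseteq\mathrm{Hom}(W(X),H)$: $Val^X_H(w\equiv w')=\{\mu:\mu(w)=\mu(w')\}$; $\mu\in Val^X_H(\exists x\,u)$ iff some point $\nu$ agreeing with $\mu$ on $X\setminus\{x\}$ lies in $Val^X_H(u)$; $\vee,\wedge,\neg$ are union, intersection, complement; $\mu\in Val^Y_H(s_*u)$ iff $\mu\circ s\in Val^X_H(u)$. The logical kernel of $\mu:W(X)\to H$ is $LKer(\mu)=\{u\in\Phi(X):\mu\in Val^X_H(u)\}$; a set $T\subseteq\Phi(X)$ is an $X$-type of $H$ if $T=LKer(\mu)$ for some point $\mu:W(X)\to H$. Algebras $H_1,H_2\in\Theta$ are isotyped if for every finite $X\subset X^0$, every $X$-type of $H_1$ is an $X$-type of $H_2$ and vice versa. *)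

(* Defs.v *)
From mathcomp Require Import all_boot.
From mathcomp Require Import finmap.
Set Implicit Arguments.
Unset Strict Implicit.
Unset Printing Implicit Defensive.
Local Open Scope fset_scope.

Record signature := Signature { sym : Type; ar : sym -> nat }.

Record algebra (s : signature) := Algebra {
  carrier :> Type;
  ops : forall f : sym s, ('I_(ar f) -> carrier) -> carrier }.
Arguments ops {s} a f _.

Inductive term (s : signature) (V : Type) : Type :=
| Var : V -> term s V
| App : forall f : sym s, ('I_(ar f) -> term s V) -> term s V.
Arguments Var {s V}.
Arguments App {s V}.

Fixpoint eval (s : signature) (A : algebra s) (V : Type) (mu : V -> A)
  (t : term s V) : A :=
  match t with
  | Var v => mu v
  | App f ts => ops A f (fun i => eval mu (ts i))
  end.

Record variety (s : signature) := Variety {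
  identities : term s nat -> term s nat -> Prop }.

Definition in_variety (s : signature) (Th : variety s) (A : algebra s) : Prop :=
  forall t1 t2, identities Th t1 t2 ->
    forall rho : nat -> A, eval rho t1 = eval rho t2.

Definition is_hom (s : signature) (A B : algebra s) (h : A -> B) : Prop :=
  forall (f : sym s) (args : 'I_(ar f) -> A),
    h (ops A f args) = ops B f (fun i => h (args i)).

Definition isomorphic (s : signature) (A B : algebra s) : Prop :=
  exists h : A -> B, is_hom h /\ bijective h.

Definition closed (s : signature) (A : algebra s) (P : A -> Prop) : Prop :=
  forall (f : sym s) (args : 'I_(ar f) -> A),
    (forall i, P (args i)) -> P (ops A f args).

Definition subalgebra (s : signature) (A : algebra s) (P : A -> Prop)
  (cl : closed P) : algebra s :=
  @Algebra s {x : A | P x}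
    (fun f args => exist P (ops A f (fun i => proj1_sig (args i)))
                         (cl f _ (fun i => proj2_sig (args i)))).

Definition no_proper_iso_subalgebra (s : signature) (H : algebra s) : Prop :=
  forall (P : H -> Prop) (cl : closed P),
    (exists x : H, ~ P x) -> ~ isomorphic (subalgebra cl) H.

Definition fin_generated (s : signature) (H : algebra s) : Prop :=
  exists gens : seq H, forall P : H -> Prop, closed P ->
    (forall i, i < size gens -> forall x0 : H, P (nth x0 gens i)) -> forall x, P x.

(** Elements of W(X) are represented by terms over the variables of X
    (W(X) = terms modulo the identities of the variety), homomorphisms
    W(X) -> W(Y) by substitutions X -> term Y, points W(X) -> H by
    assignments X -> H. *)
Definition vars (X : {fset nat}) := {x : nat | x \in X}.

Inductive formula (s : signature) : {fset nat} -> Type :=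
| Feq  X : term s (vars X) -> term s (vars X) -> formula s X
| Fneg X : formula s X -> formula s X
| For  X : formula s X -> formula s X -> formula s X
| Fand X : formula s X -> formula s X -> formula s X
| Fex  X : vars X -> formula s X -> formula s X
| Fsub X Y : (vars X -> term s (vars Y)) -> formula s X -> formula s Y.

Definition upd (H : Type) (X : {fset nat}) (mu : vars X -> H) (x : vars X) (a : H)
  : vars X -> H :=
  fun y => if proj1_sig y == proj1_sig x then a else mu y.

Fixpoint sat (s : signature) (H : algebra s) (X : {fset nat}) (u : formula s X)
  : (vars X -> H) -> Prop :=
  match u in formula _ X return (vars X -> H) -> Prop with
  | Feq _ w w' => fun mu => eval mu w = eval mu w'
  | Fneg _ u1 => fun mu => ~ sat u1 mu
  | For _ u1 u2 => fun mu => sat u1 mu \/ sat u2 mu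
  | Fand _ u1 u2 => fun mu => sat u1 mu /\ sat u2 mu
  | Fex _ x u1 => fun mu => exists a : H, sat u1 (upd mu x a)
  | Fsub _ _ sb u1 => fun mu => sat u1 (fun x => eval mu (sb x))
  end.

Definition LKer (s : signature) (H : algebra s) (X : {fset nat}) (mu : vars X -> H)
  : formula s X -> Prop := fun u => @sat s H X u mu.

Definition is_type (s : signature) (H : algebra s) (X : {fset nat})
  (T : formula s X -> Prop) : Prop :=
  exists mu : vars X -> H, T = @LKer s H X mu.

Definition isotyped (s : signature) (H1 H2 : algebra s) : Prop :=
  forall (X : {fset nat}) (T : formula s X -> Prop),
    (is_type H1 T -> is_type H2 T) /\ (is_type H2 T -> is_type H1 T).

(* Main.v *)
Require Import Defs.
From mathcomp Require Import all_boot.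
From mathcomp Require Import finmap.
From Stdlib Require Import ClassicalEpsilon FunctionalExtensionality ProofIrrelevance Classical.
Set Implicit Arguments.
Unset Strict Implicit.
Unset Printing Implicit Defensive.
Local Open Scope fset_scope.

Lemma sig_eq (T : Type) (P : T -> Prop) (x y : {a : T | P a}) :
  proj1_sig x = proj1_sig y -> x = y.
Proof.
case: x => a pa; case: y => b pb /= e; subst b.
by rewrite (proof_irrelevance _ pa pb).
Qed.

Section Aux.
Variable s : signature.

Lemma kernel_hom (A B : algebra s) (X : {fset nat}) (mu : vars X -> A) (nu : vars X -> B) :
  (forall u : formula s X, sat u mu <-> sat u nu) ->
  (forall a : A, exists t, eval mu t = a) ->
  exists h : A -> B, is_hom h /\ injective h /\ forall t, h (eval mu t) = eval nu t.
Proof.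
move=> K gen.
have keq : forall t t', eval mu t = eval mu t' <-> eval nu t = eval nu t'.
  by move=> t t'; exact: (K (Feq t t')).
pose pick a := proj1_sig (constructive_indefinite_description _ (gen a)).
have pickE : forall a, eval mu (pick a) = a.
  by move=> a; rewrite /pick; case: constructive_indefinite_description.
exists (fun a => eval nu (pick a)); split; [|split].
- move=> f args /=.
  pose ts := fun i => pick (args i).
  have ea : ops A f args = eval mu (App f ts).
    rewrite /=; congr (ops A f); apply: functional_extensionality => i.
    by rewrite pickE.
  rewrite ea.
  have : eval nu (pick (eval mu (App f ts))) = eval nu (App f ts).
    by apply/keq; rewrite pickE.
  by move=> ->.
- move=> a b /= /keq; by rewrite !pickE.
- by move=> t /=; apply/keq; rewrite pickE.
Qed.

Lemma iso_of_inj_surj (A B : algebra s) (h : A -> B) :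
  is_hom h -> injective h -> (forall b, exists a, h a = b) -> isomorphic B A.
Proof.
move=> hh hi hs.
pose g b := proj1_sig (constructive_indefinite_description _ (hs b)).
have gK : forall b, h (g b) = b.
  by move=> b; rewrite /g; case: constructive_indefinite_description.
have hK : forall a, g (h a) = a by move=> a; apply: hi; rewrite gK.
exists g; split; last by exists h.
move=> f args.
have -> : args = (fun i => h (g (args i))).
  by apply: functional_extensionality => i; rewrite gK.
rewrite -hh hK; congr (ops A f); apply: functional_extensionality => i.
by rewrite hK.
Qed.

Fixpoint tmap (V W : Type) (m : V -> W) (t : term s V) : term s W :=
  match t with
  | Var v => Var (m v)
  | App f ts => App f (fun i => tmap m (ts i))
  end.

Lemma eval_tmap (A : algebra s) (V W : Type) (m : V -> W) (rho : W -> A) t :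
  eval rho (tmap m t) = eval (fun v => rho (m v)) t.
Proof.
elim: t => [v|f ts IH] //=; congr (ops A f).
by apply: functional_extensionality => i; rewrite IH.
Qed.

Lemma ker_of_eq (A B : algebra s) X (mu : vars X -> A) (nu : vars X -> B) :
  LKer mu = LKer nu -> forall u, sat u mu <-> sat u nu.
Proof. by move=> e u; have := f_equal (fun T => T u) e; rewrite /LKer => ->. Qed.

End Aux.

Theorem mainTheorem7 (s : signature) (Th : variety s) (H : algebra s) :
  in_variety Th H -> fin_generated H -> no_proper_iso_subalgebra H ->
  forall G : algebra s, in_variety Th G -> isotyped G H -> isomorphic G H.
Proof.
move=> _ [gens Hgen] Hnp G _ Hiso.
pose n := size gens.
pose X : {fset nat} := [fset i in iota 0 n].
have memX : forall x : vars X, proj1_sig x < n.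
  case=> x /=; rewrite /X in_fset /= mem_iota.
  by rewrite add0n.
pose mu : vars X -> H := fun x => tnth (in_tuple gens) (Ordinal (memX x)).
have gen : forall a : H, exists t, eval mu t = a.
  apply: (Hgen (fun a => exists t, eval mu t = a)).
  - move=> f args Hargs.
    have [ts Hts] : exists ts : 'I_(ar f) -> term s (vars X),
        forall i, eval mu (ts i) = args i.
      exists (fun i => proj1_sig (constructive_indefinite_description _ (Hargs i))).
      by move=> i; case: constructive_indefinite_description.
    exists (App f ts) => /=; congr (ops H f).
    by apply: functional_extensionality.
  - move=> i Hi x0.
    have iX : i \in X by rewrite /X in_fset /= mem_iota add0n.
    exists (Var (exist _ i iX)) => /=.
    by rewrite /mu (tnth_nth x0).
have [nu Enu] : is_type G (LKer mu).
  by apply: (proj2 (Hiso X (LKer mu))); exists mu.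
have Knu := ker_of_eq Enu.
have [f [fh [fi fE]]] := kernel_hom Knu gen.
apply: (iso_of_inj_surj fh fi) => b.
pose k := n.
have kX : k \notin X by rewrite /X in_fset /= mem_iota add0n ltnn andbF.
pose Y : {fset nat} := X `|` [fset k].
have incP : forall x : vars X, proj1_sig x \in Y.
  by move=> x; rewrite in_fsetU (proj2_sig x).
pose inc (x : vars X) : vars Y := exist _ (proj1_sig x) (incP x).
have kY : k \in Y by rewrite in_fsetU in_fset1 eqxx orbT.
pose kv : vars Y := exist (fun x : nat => x \in Y) k kY.
pose nu' : vars Y -> G := fun y =>
  (if proj1_sig y \in X as c return (proj1_sig y \in X) = c -> G
   then fun h => nu (exist _ (proj1_sig y) h) else fun _ => b) erefl.
have nu'inc : (fun x => nu' (inc x)) = nu.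
  apply: functional_extensionality => -[x xX] /=.
  rewrite /nu' /=.
  move: (erefl (x \in X)).
  have P : forall (c : bool) (e : (x \in X) = c),
     (if c as c0 return (x \in X) = c0 -> G then fun h => nu (exist (fun x : nat => x \in X) x h)
      else fun _ => b) e = nu (exist _ x xX).
    move=> c; case: c => e; first by rewrite (bool_irrelevance e xX).
    by rewrite xX in e.
  by move=> e; apply: P.
have nu'k : nu' kv = b.
  rewrite /nu' /=.
  move: (erefl (k \in X)).
  have P : forall (c : bool) (e : (k \in X) = c),
     (if c as c0 return (k \in X) = c0 -> G then fun h => nu (exist (fun x : nat => x \in X) k h)
      else fun _ => b) e = b.
    move=> c; case: c => e //.
    by rewrite e in kX.
  by move=> e; apply: P.
have [mu' Emu'] : is_type H (LKer nu').
  by apply: (proj1 (Hiso Y (LKer nu'))); exists nu'.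
have Kmu' := ker_of_eq Emu'.
pose mu0 : vars X -> H := fun x => mu' (inc x).
have K0 : forall u : formula s X, sat u mu <-> sat u mu0.
  move=> u.
  have e1 : sat u mu0 <-> sat (Fsub (fun x => Var (inc x)) u) mu' by [].
  have e2 : sat u nu <-> sat (Fsub (fun x => Var (inc x)) u) nu'.
    by rewrite /= nu'inc.
  rewrite e1 -(Kmu' (Fsub _ u)) -e2.
  exact: (Knu u).
have [f0 [f0h [f0i f0E]]] := kernel_hom K0 gen.
pose P : H -> Prop := fun a => exists t, eval mu0 t = a.
have clP : Defs.closed P.
  move=> fs args Hargs.
  have [ts Hts] : exists ts : 'I_(ar fs) -> term s (vars X),
      forall i, eval mu0 (ts i) = args i.
    exists (fun i => proj1_sig (constructive_indefinite_description _ (Hargs i))).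
    by move=> i; case: constructive_indefinite_description.
  exists (App fs ts) => /=; congr (ops H fs).
  by apply: functional_extensionality.
have allP : forall x, P x.
  move=> x; apply: NNPP => nPx.
  apply: (Hnp P clP); first by exists x.
  have Pf0 : forall a, P (f0 a).
    by move=> a; case: (gen a) => t <-; exists t; rewrite f0E.
  pose F (a : H) : subalgebra clP := exist P (f0 a) (Pf0 a).
  have F0 : forall a, proj1_sig (F a) = f0 a by [].
  apply: (@iso_of_inj_surj _ H (subalgebra clP) F).
  - move=> fs args; apply: sig_eq => /=.
    by rewrite f0h.
  - by move=> a1 a2 e; apply: f0i; rewrite -F0 e.
  - move=> [y [t Ht]]; exists (eval mu t); apply: sig_eq => /=.
    by rewrite f0E.
have [t Ht] := allP (mu' kv).
exists (eval mu t); rewrite fE.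
have Hs : sat (Feq (Var kv) (tmap inc t)) mu'.
  by rewrite /= eval_tmap.
move/(Kmu' (Feq _ _)): Hs => /=.
by rewrite nu'k eval_tmap nu'inc => ->.
Qed.
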